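(* Consider shadow estimation with uniform sampling from the local Clifford group $\mathrm{Cl}_1^{\times n}$ with noise channels $\Lambda(g_1,\dots,g_n)$ for each $(g_1,\dots,g_n)\in\mathrm{Cl}_1^{\times n}$. Then the noisy frame operator $\tilde S=\mathbb{E}_{g}[\omega(g)^\dagger M\omega(g)\Lambda(g)]$ ($g$ uniform) is $$\tilde S=\sum_{a\in\mathbb{F}_2^{2n}}\frac1{3^{|\mathrm{supp}(a)|}}|\hat\sigma_a)(\hat\sigma_a|\,\bar\Lambda_a,$$ where $\bar\Lambda_a=\mathbb{E}_{g_1\in G(a_1)}\cdots\mathbb{E}_{g_n\in G(a_n)}\Lambda(g_1,\dots,g_n)$. If the noise is local, i.e. $\Lambda(g_1,\dots,g_n)=\bigotimes_{i=1}^n\Lambda^{(i)}(g_i)$, then $\bar\Lambda_a=\bigotimes_{i=1}^n\mathbb{E}_{g_i\in G(a_i)}\Lambda^{(i)}(g_i)$.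
   Context: $d=2^n$; $(A|B)=\mathrm{Tr}(A^\dagger B)$; $|A)(B|$ is $C\mapsto(B|C)A$; $\omega(g)(A)=gAg^\dagger$, $\omega(g)^\dagger(A)=g^\dagger Ag$; for $g=g_1\otimes\cdots\otimes g_n$, $\omega(g)=\bigotimes_i\omega(g_i)$. $M=\sum_{x\in\mathbb{F}_2^n}|E_x)(E_x|$ with $E_x=|x\rangle\langle x|$. Single-qubit Paulis $\sigma_{00}=\mathbb 1,\sigma_{01}=X,\sigma_{11}=Y,\sigma_{10}=Z$; for $a=(a_1,\dots,a_n)$, $a_i\in\mathbb{F}_2^2$, $\sigma_a=\bigotimes_i\sigma_{a_i}$, $\hat\sigma_a=\sigma_a/\sqrt d$, $|\mathrm{supp}(a)|=|\{i:a_i\ne0\}|$. $\mathrm{Cl}_1$ is the single-qubit Clifford group, $\mathrm{St}(Z)=\{h\in\mathrm{Cl}_1:\omega(h)^\dagger|Z)(Z|\omega(h)=|Z)(Z|\}$, and for $a\in\mathbb{F}_2^2\setminus\{0\}$, $g_a\in\mathrm{Cl}_1$ is an element with $\omega(g_a)^\dagger|Z)(Z|\omega(g_a)=|\sigma_a)(\sigma_a|$. $G(a)=\mathrm{Cl}_1$ if $a=0$ and $G(a)=\mathrm{St}(Z)g_a=\{hg_a:h\in\mathrm{St}(Z)\}$ if $a\ne0$. Expectations over $G(a_i)$ are uniform averages. *)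

(* Defs.v *)
From HB Require Import structures.
From mathcomp Require Import all_boot all_order all_algebra all_field.
From mathcomp Require Import boolp.
Set Implicit Arguments. Unset Strict Implicit. Unset Printing Implicit Defensive.
Import Order.TTheory GRing.Theory Num.Theory.
Local Open Scope ring_scope.

(* Operators (matrices) indexed by a finite basis I: entries A (row, col). *)
Notation Op I := {ffun (I * I)%type -> algC}.

(* one qubit: basis |0> = false, |1> = true *)
Notation Mat2 := (Op bool).
Notation bits n := {ffun 'I_n -> bool}.
Notation OpN n := (Op (bits n)).

Section Ops.
Variable I : finType.
Definition scop (c : algC) (A : Op I) : Op I := [ffun p => c * A p].
Definition mulop (A B : Op I) : Op I :=
  [ffun p => \sum_(z : I) A (p.1, z) * B (z, p.2)].
Definition adj (A : Op I) : Op I := [ffun p => (A (p.2, p.1))^*].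
Definition idop : Op I := [ffun p => (p.1 == p.2)%:R].
Definition trop (A : Op I) : algC := \sum_(x : I) A (x, x).
Definition hs (A B : Op I) : algC := trop (mulop (adj A) B).
Definition ketbra (A B : Op I) : Op I -> Op I := fun C => scop (hs B C) A.
Definition omega (g : Op I) : Op I -> Op I := fun A => mulop (mulop g A) (adj g).
Definition omegad (g : Op I) : Op I -> Op I := fun A => mulop (mulop (adj g) A) g.
Definition unitary (g : Op I) : Prop := mulop g (adj g) = idop.
Definition phase_eq (A B : Op I) : Prop := exists c : algC, `|c| = 1 /\ A = scop c B.
End Ops.

(* single-qubit Paulis: sigma_00 = 1, sigma_01 = X, sigma_11 = Y, sigma_10 = Z,
   an element of F_2^2 being a pair of booleans *)
Definition Xm : Mat2 := [ffun p => (p.1 != p.2)%:R].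
Definition Ym : Mat2 := [ffun p => if p.1 == p.2 then 0 else if p.1 then 'i else - 'i].
Definition Zm : Mat2 := [ffun p => if p.1 == p.2 then (if p.1 then -1 else 1) else 0].
Definition pauli1 (b : bool * bool) : Mat2 :=
  match b with
  | (false, false) => idop bool
  | (false, true) => Xm
  | (true, true) => Ym
  | (true, false) => Zm
  end.

Definition clifford1 (V : Mat2) : Prop :=
  forall b, exists b' (k : nat), omega V (pauli1 b) = scop ('i ^+ k) (pauli1 b').

Definition tens n (g : 'I_n -> Mat2) : OpN n :=
  [ffun p : bits n * bits n => \prod_(i < n) g i (p.1 i, p.2 i)].

Notation pauliv n := {ffun 'I_n -> (bool * bool)%type}.
Definition sigma n (a : pauliv n) : OpN n := tens (fun i => pauli1 (a i)).
Definition dim n : algC := (2 ^ n)%:R.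
Definition hsigma n (a : pauliv n) : OpN n := scop (sqrtC (dim n))^-1 (sigma a).
Definition supp n (a : pauliv n) : nat := #|[set i | a i != (false, false)]|.

Definition Eop n (x : bits n) : OpN n := [ffun p : bits n * bits n => ((p.1 == x) && (p.2 == x))%:R].
Definition Mop n (C : OpN n) : OpN n := \sum_(x : bits n) ketbra (Eop x) (Eop x) C.

Definition munit (j k : bool) : Mat2 := [ffun p => ((p.1 == j) && (p.2 == k))%:R].

(* tensor product of single-qubit superoperators, defined as the linear
   extension of its action on product matrix units *)
Definition tens_super n (L : 'I_n -> Mat2 -> Mat2) (C : OpN n) : OpN n :=
  [ffun p : bits n * bits n => \sum_(q : bits n * bits n)
                C q * \prod_(i < n) L i (munit (q.1 i) (q.2 i)) (p.1 i, p.2 i)].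

(* The single-qubit Clifford group, modulo global phases, is given by a finite
   type T of representatives U : T -> Mat2 (a transversal of Cl_1 / U(1)). *)
Definition clifford_transversal (T : finType) (U : T -> Mat2) : Prop :=
  [/\ forall t, unitary (U t) /\ clifford1 (U t),
      forall V, unitary V -> clifford1 V -> exists t, phase_eq V (U t)
    & forall t t', phase_eq (U t) (U t') -> t = t'].

Section Groups.
Variables (T : finType) (U : T -> Mat2).
Definition StZ : {set T} :=
  [set h | `[< forall A, omegad (U h) (ketbra Zm Zm (omega (U h) A)) = ketbra Zm Zm A >]].
(* G(a) = Cl_1 if a = 0, St(Z) g_a otherwise (products taken modulo phase,
   i.e. the representative in T of h * g_a) *)
Definition Gset (ga : bool * bool -> T) (a : bool * bool) : {set T} :=
  if a == (false, false) then setT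
  else [set t | `[< exists2 h, h \in StZ & phase_eq (U t) (mulop (U h) (U (ga a))) >]].
Definition avg_super (G : {set T}) (L : T -> Mat2 -> Mat2) : Mat2 -> Mat2 :=
  fun A => scop (#|G|%:R)^-1 (\sum_(t in G) L t A).
End Groups.

(* Main.v *)
Require Import Defs.
From HB Require Import structures.
From mathcomp Require Import all_boot all_order all_algebra all_field.
From mathcomp Require Import boolp.
From mathcomp Require Import ring.
Import Order.TTheory GRing.Theory Num.Theory.
Local Open Scope ring_scope.
Set Implicit Arguments. Unset Strict Implicit.

Section OpL.
Context {I : finType}.
Implicit Types A B C V W : Op I.

Lemma mulopE A B i j : mulop A B (i, j) = \sum_z A (i, z) * B (z, j).
Proof. by rewrite ffunE. Qed.
Lemma adjE A i j : adj A (i, j) = (A (j, i))^*.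
Proof. by rewrite ffunE. Qed.
Lemma scopE c A p : scop c A p = c * A p.
Proof. by rewrite ffunE. Qed.
Lemma idopE i j : idop I (i, j) = (i == j)%:R.
Proof. by rewrite ffunE. Qed.

Lemma opP A B : (forall i j, A (i, j) = B (i, j)) -> A = B.
Proof. by move=> H; apply/ffunP => -[i j]. Qed.

Lemma mulopA A B C : mulop (mulop A B) C = mulop A (mulop B C).
Proof.
apply: opP => i j; rewrite !mulopE.
under eq_bigr do rewrite mulopE mulr_suml.
rewrite exchange_big /=; apply: eq_bigr => w _.
by rewrite mulopE mulr_sumr; apply: eq_bigr => z _; rewrite mulrA.
Qed.

Lemma mulop1 A : mulop A (idop I) = A.
Proof.
apply: opP => i j; rewrite mulopE (bigD1 j) //= idopE eqxx mulr1 big1 ?addr0 //.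
by move=> z /negPf nz; rewrite idopE nz mulr0.
Qed.
Lemma mul1op A : mulop (idop I) A = A.
Proof.
apply: opP => i j; rewrite mulopE (bigD1 i) //= idopE eqxx mul1r big1 ?addr0 //.
by move=> z; rewrite eq_sym => /negPf nz; rewrite idopE nz mul0r.
Qed.

Lemma adjK A : adj (adj A) = A.
Proof. by apply: opP => i j; rewrite !adjE conjCK. Qed.

Lemma adj_mul A B : adj (mulop A B) = mulop (adj B) (adj A).
Proof.
apply: opP => i j; rewrite adjE !mulopE rmorph_sum; apply: eq_bigr => z _.
by rewrite rmorphM !adjE mulrC.
Qed.

Lemma mulopZl c A B : mulop (scop c A) B = scop c (mulop A B).
Proof.
apply: opP => i j; rewrite scopE !mulopE mulr_sumr; apply: eq_bigr => z _.
by rewrite scopE mulrA.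
Qed.
Lemma mulopZr c A B : mulop A (scop c B) = scop c (mulop A B).
Proof.
apply: opP => i j; rewrite scopE !mulopE mulr_sumr; apply: eq_bigr => z _.
by rewrite scopE mulrCA.
Qed.
Lemma scopA c d A : scop c (scop d A) = scop (c * d) A.
Proof. by apply: opP => i j; rewrite !scopE mulrA. Qed.
Lemma scop1 A : scop 1 A = A.
Proof. by apply: opP => i j; rewrite !scopE mul1r. Qed.
Lemma adjZ c A : adj (scop c A) = scop c^* (adj A).
Proof. by apply: opP => i j; rewrite !adjE !scopE rmorphM adjE. Qed.

Lemma trop_mulC A B : trop (mulop A B) = trop (mulop B A).
Proof.
rewrite /trop; under eq_bigr do rewrite mulopE.
rewrite exchange_big; apply: eq_bigr => z _; rewrite mulopE.
by apply: eq_bigr => x _; rewrite mulrC.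
Qed.

Lemma hsZr c A B : hs A (scop c B) = c * hs A B.
Proof. by rewrite /hs mulopZr /trop mulr_sumr; apply: eq_bigr => x _; rewrite scopE. Qed.
Lemma hsZl c A B : hs (scop c A) B = c^* * hs A B.
Proof. by rewrite /hs adjZ mulopZl /trop mulr_sumr; apply: eq_bigr => x _; rewrite scopE. Qed.

Definition toM A : 'M[algC]_#|I| := \matrix_(i, j) A (enum_val i, enum_val j).

Lemma toM_mul A B : toM (mulop A B) = toM A *m toM B.
Proof.
apply/matrixP => i j; rewrite !mxE mulopE.
rewrite (reindex (@enum_val I (pred_of_simpl predT))) /=; last first.
  by exists enum_rank => x _; [rewrite enum_valK | rewrite enum_rankK].
by apply: eq_bigr => k _; rewrite !mxE.
Qed.

Lemma toM_id : toM (idop I) = 1%:M.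
Proof.
apply/matrixP => i j; rewrite !mxE idopE.
by rewrite (inj_eq enum_val_inj).
Qed.

Lemma toM_inj : injective toM.
Proof.
move=> A B H; apply: opP => i j.
move/matrixP: H => /(_ (enum_rank i) (enum_rank j)).
by rewrite !mxE !enum_rankK.
Qed.

Lemma unitary_l V : unitary V -> mulop (adj V) V = idop I.
Proof.
rewrite /unitary => H; apply: toM_inj; rewrite toM_mul toM_id.
by apply: mulmx1C; rewrite -toM_mul H toM_id.
Qed.

Lemma omegaZ V c A : omega V (scop c A) = scop c (omega V A).
Proof. by rewrite /omega mulopZr mulopZl. Qed.
Lemma omegadZ V c A : omegad V (scop c A) = scop c (omegad V A).
Proof. by rewrite /omegad mulopZr mulopZl. Qed.

Lemma omegaK V A : unitary V -> omegad V (omega V A) = A.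
Proof.
move=> /unitary_l H; rewrite /omegad /omega !mulopA H mulop1 -!mulopA H mul1op //.
Qed.
Lemma omegadK V A : unitary V -> omega V (omegad V A) = A.
Proof.
move=> H; rewrite /omegad /omega !mulopA H mulop1 -!mulopA H mul1op //.
Qed.

Lemma omega_phase c V A : `|c| = 1 -> omega (scop c V) A = omega V A.
Proof.
move=> Hc; rewrite /omega adjZ !mulopZl !mulopZr scopA -normCK Hc expr1n scop1 //.
Qed.
Lemma omegad_phase c V A : `|c| = 1 -> omegad (scop c V) A = omegad V A.
Proof.
move=> Hc; rewrite /omegad adjZ !mulopZl !mulopZr scopA mulrC -normCK Hc expr1n scop1 //.
Qed.

Lemma omega_mul V W A : omega (mulop V W) A = omega V (omega W A).
Proof. by rewrite /omega adj_mul !mulopA. Qed.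
Lemma omegad_mul V W A : omegad (mulop V W) A = omegad W (omegad V A).
Proof. by rewrite /omegad adj_mul !mulopA. Qed.
Lemma omegad_adj V A : omegad (adj V) A = omega V A.
Proof. by rewrite /omegad /omega adjK. Qed.
Lemma omega_adj V A : omega (adj V) A = omegad V A.
Proof. by rewrite /omegad /omega adjK. Qed.

Lemma unitary_mul V W : unitary V -> unitary W -> unitary (mulop V W).
Proof.
rewrite /unitary adj_mul => HV HW.
by rewrite mulopA -(mulopA W) HW mul1op HV.
Qed.
Lemma unitary_adj V : unitary V -> unitary (adj V).
Proof. by rewrite /unitary adjK => /unitary_l. Qed.

Lemma adj_omegad V A : adj (omegad V A) = omegad V (adj A).
Proof. by rewrite /omegad !adj_mul adjK mulopA. Qed.

Lemma hs_omega V Z A : hs Z (omega V A) = hs (omegad V Z) A.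
Proof.
rewrite /hs adj_omegad /omegad /omega.
by rewrite !mulopA [RHS]trop_mulC !mulopA.
Qed.

Lemma SO_eq V Z A :
  omegad V (ketbra Z Z (omega V A)) = ketbra (omegad V Z) (omegad V Z) A.
Proof. by rewrite /ketbra omegadZ hs_omega. Qed.

Lemma ketbra_phase c Z A : `|c| = 1 -> ketbra (scop c Z) (scop c Z) A = ketbra Z Z A.
Proof.
move=> Hc; rewrite /ketbra hsZl scopA mulrC mulrA -normCK Hc expr1n mul1r //.
Qed.

End OpL.

Lemma cNi : (- 'i : algC)^* = 'i. Proof. by rewrite -conjCi conjCK. Qed.
Lemma cN1 : (- 1 : algC)^* = -1. Proof. exact: rmorphN1. Qed.
Lemma pauli_conj b i j : (pauli1 b (i,j))^* = pauli1 b (j,i).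
Proof.
case: b => [[] []]; case: i; case: j; rewrite /= /idop /Xm /Ym /Zm !ffunE /= ?conjC0 ?conjC1 ?conjCi ?cNi ?cN1 //.
Qed.
Lemma pauli_hs b b' : hs (pauli1 b) (pauli1 b') = (b == b')%:R * 2.
Proof.
rewrite /hs /trop !big_bool /= !mulopE !big_bool /= !adjE !pauli_conj.
case: b => [[] []] ; case: b' => [[] []];
rewrite /= /idop /Xm /Ym /Zm !ffunE /=;
rewrite ?mulr0 ?mul0r ?mulr1 ?mul1r ?mulrN ?mulNr ?opprK ?add0r ?addr0 -?expr2 ?sqrCi ?opprK;
rewrite ?mulr0 ?mul0r ?mulr1 ?mul1r ?mulrN ?mulNr ?opprK ?add0r ?addr0 ?subrr ?addrN ?addNr ?expr1n //.
Qed.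

Lemma cM (x y : algC) : (x * y)^* = x^* * y^*. Proof. exact: rmorphM. Qed.
Lemma cB (x y : algC) : (x - y)^* = x^* - y^*. Proof. exact: rmorphB. Qed.
Lemma cD (x y : algC) : (x + y)^* = x^* + y^*. Proof. exact: rmorphD. Qed.

Lemma pauli_nprop b b' c : pauli1 b = scop c (pauli1 b') -> b = b'.
Proof.
case: (eqVneq b b') => // ne H.
have h := congr1 (hs (pauli1 b')) H.
rewrite hsZr !pauli_hs eq_sym (negPf ne) eqxx mul0r mul1r in h.
have c0 : c = 0.
  by apply/eqP; move/eqP: h; rewrite eq_sym mulf_eq0 pnatr_eq0 orbF.
have := congr1 (hs (pauli1 b)) H; rewrite hsZr c0 mul0r pauli_hs eqxx mul1r.
by move/eqP; rewrite pnatr_eq0.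
Qed.

Lemma ketbra_inj b b' :
  (forall A, ketbra (pauli1 b) (pauli1 b) A = ketbra (pauli1 b') (pauli1 b') A) -> b = b'.
Proof.
move=> H; case: (eqVneq b b') => // ne.
have := congr1 (hs (pauli1 b')) (H (pauli1 b')).
rewrite /ketbra !hsZr !pauli_hs (negPf ne) eqxx /= mul0r mul1r mul0r.
by move/eqP; rewrite eq_sym mulf_eq0 pnatr_eq0.
Qed.

Lemma normi k : `|'i ^+ k : algC| = 1.
Proof. by rewrite normrX normCi expr1n. Qed.

Lemma iK k : ('i : algC) ^+ (3 * k) * 'i ^+ k = 1.
Proof.
rewrite -exprD (_ : (3 * k + k = 4 * k)%N); last by rewrite -mulSnr.
by rewrite exprM -[4%N]/(2 * 2)%N exprM sqrCi -signr_odd /= expr1n.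
Qed.

Lemma scop_cancel k (X Y : Mat2) : X = scop ('i ^+ k) Y -> Y = scop ('i ^+ (3 * k)) X.
Proof. by move=> ->; rewrite scopA iK scop1. Qed.

Lemma cliff_mul (V W : Mat2) : clifford1 V -> clifford1 W -> clifford1 (mulop V W).
Proof.
move=> HV HW b; case: (HW b) => b1 [k1 h1]; case: (HV b1) => b2 [k2 h2].
exists b2, (k1 + k2)%N; rewrite omega_mul h1 omegaZ h2 scopA -exprD //.
Qed.

Lemma cliff_adj (V : Mat2) : unitary V -> clifford1 V -> clifford1 (adj V).
Proof.
move=> HU HC.
have [pi Hpi] := choice HC.
have inj : injective pi.
  move=> b1 b2 e; case: (Hpi b1) => k1 h1; case: (Hpi b2) => k2 h2.
  have e1 : pauli1 b1 = scop ('i ^+ k1) (omegad V (pauli1 (pi b1))).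
    by rewrite -omegadZ -h1 omegaK.
  have e2 : pauli1 b2 = scop ('i ^+ k2) (omegad V (pauli1 (pi b2))).
    by rewrite -omegadZ -h2 omegaK.
  move/scop_cancel: e2 => e2.
  apply: (@pauli_nprop _ _ ('i ^+ k1 * 'i ^+ (3 * k2))).
  by rewrite e1 e e2 scopA.
have [pinv h1 h2] := injF_bij inj.
move=> b; exists (pinv b); case: (Hpi (pinv b)) => k hk; rewrite h2 in hk.
exists (3 * k)%N; rewrite omega_adj; apply: scop_cancel.
by rewrite -omegadZ -hk omegaK.
Qed.

Lemma omega_id (V : Mat2) : unitary V -> omega V (idop bool) = idop bool.
Proof. by move=> H; rewrite /omega mulop1. Qed.

Lemma R_ex (V : Mat2) : unitary V -> clifford1 V ->
  exists b c, [/\ b != (false, false), `|c| = 1 & omegad V Zm = scop c (pauli1 b)].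
Proof.
move=> HU HC; case: (cliff_adj HU HC (true, false)) => b [k hk].
rewrite omega_adj /= in hk.
exists b, ('i ^+ k); split => //; last exact: normi.
apply/eqP => b0; rewrite b0 /= in hk.
have : Zm = scop ('i ^+ k) (idop bool) by rewrite -(omega_id HU) -omegaZ -hk omegadK.
by move/(@pauli_nprop (true, false) (false, false)).
Qed.

Lemma alg4 (a0 a1 b0 b1 A B C D c : algC) : a0 + a1 = A -> a0 - a1 = c * B ->
  b0 + b1 = C -> b0 - b1 = c^* * D -> c * c^* = 1 ->
  b1 * a1 + b0 * a0 = 2^-1 * (C * A + D * B).
Proof.
move=> h1 h2 h3 h4 hc.
have e : b1 * a1 + b0 * a0 = 2^-1 * ((a0 + a1) * (b0 + b1) + (a0 - a1) * (b0 - b1)).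
  by field.
rewrite e h1 h2 h3 h4 mulrACA hc mul1r (mulrC A) (mulrC B) //.
Qed.

Lemma K_id (V : Mat2) b c : unitary V -> `|c| = 1 -> omegad V Zm = scop c (pauli1 b) ->
  forall u v p q,
  \sum_x V (x, u) * (V (x, v))^* * (V (x, p))^* * V (x, q)
    = 2^-1 * ((u == v)%:R * (p == q)%:R + (pauli1 b (u, v))^* * pauli1 b (p, q)).
Proof.
move=> HU hc hR u v p q.
have hI := unitary_l HU.
have eI : forall i j, (V (false, i))^* * V (false, j) + (V (true, i))^* * V (true, j) = (i == j)%:R.
  move=> i j; have := congr1 (fun M : Mat2 => M (i, j)) hI.
  by rewrite mulopE big_bool /= !adjE idopE addrC.
have eZ : forall i j, (V (false, i))^* * V (false, j) - (V (true, i))^* * V (true, j) = c * pauli1 b (i, j).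
  move=> i j; have := congr1 (fun M : Mat2 => M (i, j)) hR.
  rewrite scopE /omegad mulopE big_bool /= !mulopE !big_bool /= !adjE /Zm !ffunE /=.
  rewrite !mulr0 !addr0 !add0r mulrN1 mulr1 => <-.
  by rewrite mulNr addrC.
rewrite big_bool /= -(mulrA (V (true, u) * _)) -(mulrA (V (false, u) * _)).
apply: (@alg4 _ _ _ _ _ _ _ _ c).
- exact: eI.
- exact: eZ.
- have := congr1 Num.conj (eI u v); by rewrite cD !cM !conjCK conjC_nat => <-.
- have := congr1 Num.conj (eZ u v); by rewrite cB !cM !conjCK => <-.
- by rewrite -normCK hc expr1n.
Qed.

Section TL.
Context (T : finType) (U : T -> Mat2) (HT : clifford_transversal U)
  (ga : bool * bool -> T)
  (Hga : forall a, a != (false, false) ->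
     forall A, omegad (U (ga a)) (ketbra Zm Zm (omega (U (ga a)) A))
               = ketbra (pauli1 a) (pauli1 a) A).

Definition rel t b := exists c : algC, `|c| = 1 /\ omegad (U t) Zm = scop c (pauli1 b).

Lemma U_unit t : unitary (U t).
Proof. by case: HT => H _ _; case: (H t). Qed.
Lemma U_cliff t : clifford1 (U t).
Proof. by case: HT => H _ _; case: (H t). Qed.

Lemma rel_ex t : exists2 b, b != (false, false) & rel t b.
Proof.
by case: (R_ex (U_unit t) (U_cliff t)) => b [c [nz hc hR]]; exists b => //; exists c.
Qed.

Lemma norm1_neq0 (c : algC) : `|c| = 1 -> c != 0.
Proof. by move=> h; apply/eqP => c0; move: h; rewrite c0 normr0 => /eqP; rewrite eq_sym oner_eq0. Qed.

Lemma rel_uniq t b b' : rel t b -> rel t b' -> b = b'.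
Proof.
move=> [c [hc h]] [c' [hc' h']].
apply: (@pauli_nprop _ _ (c^-1 * c')).
by rewrite -scopA -h' h scopA mulVf ?scop1 // norm1_neq0.
Qed.

Lemma rel_SO t b : rel t b -> forall A,
  omegad (U t) (ketbra Zm Zm (omega (U t) A)) = ketbra (pauli1 b) (pauli1 b) A.
Proof. by move=> [c [hc h]] A; rewrite SO_eq h ketbra_phase. Qed.

Lemma SO_rel t b : (forall A,
  omegad (U t) (ketbra Zm Zm (omega (U t) A)) = ketbra (pauli1 b) (pauli1 b) A) -> rel t b.
Proof.
move=> H; case: (rel_ex t) => b' _ hb'.
have := rel_SO hb' => H'.
suff -> : b = b' by [].
by apply: ketbra_inj => A; rewrite -H -H'.
Qed.

Lemma StZ_rel h : (h \in StZ U) <-> rel h (true, false).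
Proof.
rewrite /StZ in_set; split.
  by move/asboolP => H; apply: SO_rel => A; rewrite H.
by move=> H; apply/asboolP => A; rewrite (rel_SO H).
Qed.

Lemma ga_rel a : a != (false, false) -> rel (ga a) a.
Proof. by move=> nz; apply: SO_rel; apply: Hga. Qed.

Lemma phase_sym (A B : Mat2) : phase_eq A B -> phase_eq B A.
Proof.
move=> [c [hc ->]]; exists c^-1; split; first by rewrite normfV hc invr1.
by rewrite scopA mulVf ?scop1 // norm1_neq0.
Qed.
Lemma phase_trans (A B C : Mat2) : phase_eq A B -> phase_eq B C -> phase_eq A C.
Proof.
move=> [c [hc ->]] [d [hd ->]]; exists (c * d); split; last by rewrite scopA.
by rewrite normrM hc hd mulr1.
Qed.

Lemma U_phase_inj t t' (V : Mat2) : phase_eq V (U t) -> phase_eq V (U t') -> t = t'.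
Proof.
move=> h h'; case: HT => _ _ H3; apply: H3.
exact: phase_trans (phase_sym h) h'.
Qed.

Lemma unitary_gadj a : unitary (adj (U (ga a))).
Proof. exact: unitary_adj (U_unit _). Qed.

Lemma G_rel a t : a != (false, false) -> (t \in Gset U ga a) <-> rel t a.
Proof.
move=> nz; rewrite /Gset (negPf nz) in_set; split.
  move/asboolP => [h hS [c [hc eU]]]; rewrite /rel eU.
  move/StZ_rel: hS => [c1 [hc1 h1]].
  case: (ga_rel nz) => c2 [hc2 h2].
  exists (c1 * c2); split; first by rewrite normrM hc1 hc2 mulr1.
  by rewrite omegad_phase // omegad_mul h1 /= omegadZ h2 scopA.
move=> [c [hc hR]].
set h := mulop (U t) (adj (U (ga a))).
have hU : unitary h by apply: unitary_mul; [exact: U_unit | exact: unitary_gadj].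
have hC : clifford1 h by apply: cliff_mul; [exact: U_cliff | exact: cliff_adj (U_unit _) (U_cliff _)].
case: HT => _ H2 _; case: (H2 h hU hC) => h' [c' [hc' eh]].
apply/asboolP; exists h'.
  apply/StZ_rel; case: (ga_rel nz) => c2 [hc2 h2].
  exists (c * c2^-1); split; first by rewrite normrM normfV hc hc2 invr1 mulr1.
  have eU : U h' = scop c'^-1 h by rewrite eh scopA mulVf ?scop1 // norm1_neq0.
  have hc'' : `|c'^-1| = 1 by rewrite normfV hc' invr1.
  rewrite eU omegad_phase // /h omegad_mul hR omegadZ omegad_adj.
  have -> : pauli1 a = scop c2^-1 (omegad (U (ga a)) Zm).
    by rewrite h2 scopA mulVf ?scop1 // norm1_neq0.
  by rewrite omegaZ omegadK ?scopA //; exact: U_unit.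
exists c'; split => //.
rewrite -mulopZl -eh /h mulopA (unitary_l (U_unit _)) mulop1 //.
Qed.

Definition psi a h : T :=
  odflt h [pick t | `[< phase_eq (mulop (U h) (U (ga a))) (U t) >]].

Lemma psi_spec a h : phase_eq (mulop (U h) (U (ga a))) (U (psi a h)).
Proof.
rewrite /psi; case: pickP => [t /asboolP //| H].
have hU : unitary (mulop (U h) (U (ga a))) by apply: unitary_mul; exact: U_unit.
have hC : clifford1 (mulop (U h) (U (ga a))) by apply: cliff_mul; exact: U_cliff.
case: HT => _ H2 _; case: (H2 _ hU hC) => t ht.
by move: (H t) => /asboolP.
Qed.

Lemma psi_inj a : injective (psi a).
Proof.
move=> h1 h2 e.
have s1 := psi_spec a h1; rewrite e in s1.
have [c [hc E]] := phase_trans s1 (phase_sym (psi_spec a h2)).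
have E' := congr1 (fun M => mulop M (adj (U (ga a)))) E; rewrite /= mulopZl !mulopA in E'.
rewrite (U_unit (ga a)) !mulop1 in E'.
by case: HT => _ _ H3; apply: H3; exists c.
Qed.

Lemma G_img a : a != (false, false) -> Gset U ga a = psi a @: StZ U.
Proof.
move=> nz; apply/setP => t; rewrite /Gset (negPf nz) in_set.
apply/asboolP/imsetP.
  move=> [h hS ph]; exists h => //.
  exact: U_phase_inj (phase_sym ph) (psi_spec a h).
by move=> [h hS ->]; exists h => //; apply: phase_sym; exact: psi_spec.
Qed.

Lemma card_G a : a != (false, false) -> #|Gset U ga a| = #|StZ U|.
Proof. by move=> nz; rewrite G_img // card_imset //; exact: psi_inj. Qed.

Lemma card_T : #|T| = (3 * #|StZ U|)%N.
Proof.
have H1 : forall t : T, (\sum_(b | b != (false, false)) (t \in Gset U ga b) = 1)%N.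
  move=> t; case: (rel_ex t) => b0 nz h0.
  rewrite (bigD1 b0) //=.
  have -> : t \in Gset U ga b0 by apply/G_rel.
  rewrite big1 // => b /andP [nzb nb]; case: (boolP (t \in _)) => // /(G_rel _ nzb) hb.
  by move: nb; rewrite (rel_uniq hb h0) eqxx.
transitivity (\sum_(t : T) 1)%N; first by rewrite sum1_card.
rewrite (eq_bigr (fun t => \sum_(b | b != (false, false)) (t \in Gset U ga b))%N); last first.
  by move=> t _; rewrite H1.
rewrite exchange_big /=.
rewrite (eq_bigr (fun _ => #|StZ U|)); last first.
  move=> b nz; rewrite -(card_G nz).
  transitivity (\sum_(t in Gset U ga b) 1)%N; last by rewrite sum1_card.
  by rewrite [RHS]big_mkcond /=; apply: eq_bigr => t _; case: (t \in Gset U ga b).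
rewrite sum_nat_const.
rewrite cardC1 card_prod card_bool /= mulnC //.
Qed.

Lemma G_size a : a != (false, false) -> (3 * #|Gset U ga a|)%N = #|T|.
Proof. by move=> nz; rewrite card_G // card_T. Qed.

Lemma perq t u v p q :
  \sum_x U t (x, u) * (U t (x, v))^* * (U t (x, p))^* * U t (x, q)
  = \sum_(b | t \in Gset U ga b) 2^-1 * (pauli1 b (u, v))^* * pauli1 b (p, q).
Proof.
case: (rel_ex t) => b0 nz [c [hc hR]].
rewrite (K_id (U_unit t) hc hR).
rewrite (eq_bigl (fun b => (b == (false, false)) || (b == b0))); last first.
  move=> b /=; case: (eqVneq b (false, false)) => [-> | nzb] /=.
    by rewrite /Gset eqxx in_setT.
  apply/idP/idP; first by move/(G_rel _ nzb) => hb; rewrite (rel_uniq hb (ex_intro _ c (conj hc hR))).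
  by move/eqP ->; apply/(G_rel _ nz); exists c.
rewrite (bigD1 (false, false)) //=.
rewrite (eq_bigl (pred1 b0)); last first.
  move=> b /=; case: (eqVneq b b0) => [-> | ]; first by rewrite orbT nz.
  by rewrite orbF andbN.
rewrite big_pred1_eq /= !idopE conjC_nat mulrDr !mulrA //.
Qed.

End TL.

Lemma cP n (F : 'I_n -> algC) : (\prod_(i < n) F i)^* = \prod_(i < n) (F i)^*.
Proof. exact: rmorph_prod. Qed.

Lemma hs_E n (x : bits n) (W : OpN n) : hs (Eop x) W = W (x, x).
Proof.
rewrite /hs /trop (bigD1 x) //= big1 ?addr0.
  rewrite mulopE (bigD1 x) //= big1 ?addr0.
    by rewrite adjE ffunE /= eqxx conjC1 mul1r.
  by move=> z nz; rewrite adjE ffunE /= (negPf nz) conjC0 mul0r.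
move=> j nj; rewrite mulopE big1 // => z _.
by rewrite adjE ffunE /= (negPf nj) andbF conjC0 mul0r.
Qed.

Lemma Mop_E n (Y : OpN n) w z : Mop Y (w, z) = (w == z)%:R * Y (w, w).
Proof.
rewrite /Mop sum_ffunE (bigD1 w) //= big1 ?addr0.
  by rewrite /ketbra scopE hs_E ffunE /= eqxx /= mulrC eq_sym.
by move=> x nx; rewrite /ketbra scopE ffunE /= eq_sym (negPf nx) mulr0.
Qed.

Lemma omegad_Mop n (g Y : OpN n) p1 p2 :
  omegad g (Mop Y) (p1, p2) = \sum_w (g (w, p1))^* * Y (w, w) * g (w, p2).
Proof.
rewrite /omegad mulopE; apply: eq_big => // z _.
rewrite mulopE (bigD1 z) //= big1 ?addr0.
  by rewrite adjE Mop_E eqxx mul1r.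
by move=> w nw; rewrite Mop_E (negPf nw) mul0r mulr0.
Qed.

Section NQ.
Context (T : finType) (U : T -> Mat2) (HT : clifford_transversal U)
  (ga : bool * bool -> T)
  (Hga : forall a, a != (false, false) ->
     forall A, omegad (U (ga a)) (ketbra Zm Zm (omega (U (ga a)) A))
               = ketbra (pauli1 a) (pauli1 a) A).
Context (n : nat).

Lemma per_t (t : {ffun 'I_n -> T}) (X : OpN n) p1 p2 :
  omegad (tens (fun i => U (t i))) (Mop (omega (tens (fun i => U (t i))) X)) (p1, p2)
  = \sum_(a : pauliv n | [forall i, t i \in Gset U ga (a i)])
       hs (hsigma a) X * hsigma a (p1, p2).
Proof.
set g := tens (fun i => U (t i)).
pose Phi (y z : bits n) := \prod_(i < n)
   \sum_(b | t i \in Gset U ga b) 2^-1 * (pauli1 b (y i, z i))^* * pauli1 b (p1 i, p2 i).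
transitivity (\sum_y \sum_z X (y, z) * Phi y z).
  rewrite omegad_Mop.
  transitivity (\sum_w \sum_z \sum_y X (y, z) *
     (g (w, y) * (g (w, z))^* * (g (w, p1))^* * g (w, p2))).
    apply: eq_bigr => w _; rewrite /omega mulopE mulr_sumr mulr_suml.
    apply: eq_big => // z _; rewrite mulopE !mulr_suml mulr_sumr mulr_suml.
    by apply: eq_big => // y _; rewrite adjE; ring.
  rewrite exchange_big /=; under eq_bigr do rewrite exchange_big /=.
  rewrite exchange_big /=; apply: eq_big => // y _; apply: eq_big => // z _.
  rewrite -mulr_sumr; congr (_ * _).
  rewrite /Phi; under [RHS]eq_bigr do rewrite -(perq HT Hga).
  rewrite bigA_distr_bigA /=; apply: eq_bigr => w _.
  rewrite /g !ffunE /= !cP -!big_split /=.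
  by apply: eq_bigr => i _.
have hcc : ((sqrtC (Defs.dim n))^-1)^* * (sqrtC (Defs.dim n))^-1 = (Defs.dim n)^-1.
  rewrite geC0_conj; last by rewrite invr_ge0 sqrtC_ge0 /Defs.dim ler0n.
  by rewrite -invfM -expr2 sqrtCK.
rewrite [RHS](eq_bigr (fun a => \sum_y \sum_z X (y, z) *
   ((Defs.dim n)^-1 * (sigma a (y, z))^* * sigma a (p1, p2)))); last first.
  move=> a _; rewrite /hsigma hsZl scopE /hs /trop.
  under eq_bigr do rewrite mulopE.
  rewrite exchange_big /= mulr_sumr mulr_suml; apply: eq_big => // y _.
  rewrite mulr_sumr mulr_suml; apply: eq_big => // z _.
  by rewrite adjE -hcc; ring.
rewrite [RHS]exchange_big /=; apply: eq_big => // y _.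
rewrite [RHS]exchange_big /=; apply: eq_big => // z _.
rewrite -mulr_sumr; congr (_ * _).
rewrite /Phi bigA_distr_big_dep /=.
apply: eq_big.
  by move=> a; apply/familyP/forallP.
move=> a _.
rewrite /sigma /tens !ffunE /= cP !big_split /= prodr_const card_ord /Defs.dim natrX exprVn.
by [].
Qed.
End NQ.

Lemma hsE {I : finType} (A B : Op I) : hs A B = \sum_x \sum_z (A (z, x))^* * B (z, x).
Proof. by rewrite /hs /trop; apply: eq_bigr => x _; rewrite mulopE; apply: eq_bigr => z _; rewrite adjE. Qed.

Lemma hs_sum {I J : finType} (A : Op I) (P : pred J) (B : J -> Op I) :
  hs A (\sum_(j | P j) B j) = \sum_(j | P j) hs A (B j).
Proof.
apply: (big_morph (hs A)).
  move=> X Y; rewrite !hsE -big_split /=; apply: eq_bigr => x _.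
  by rewrite -big_split /=; apply: eq_bigr => z _; rewrite ffunE mulrDr.
by rewrite hsE big1 // => x _; rewrite big1 // => z _; rewrite ffunE mulr0.
Qed.

Unset Implicit Arguments.
Theorem proposition4 (n : nat) (T : finType) (U : T -> Mat2)
  (HT : clifford_transversal U)
  (ga : bool * bool -> T)
  (Hga : forall a, a != (false, false) ->
     forall A, omegad (U (ga a)) (ketbra Zm Zm (omega (U (ga a)) A))
               = ketbra (pauli1 a) (pauli1 a) A)
  (Lam : {ffun 'I_n -> T} -> OpN n -> OpN n) :
  let g := fun t : {ffun 'I_n -> T} => tens (fun i => U (t i)) in
  let Stilde := fun C : OpN n =>
      scop (#|{ffun 'I_n -> T}|%:R)^-1
        (\sum_(t : {ffun 'I_n -> T}) omegad (g t) (Mop (omega (g t) (Lam t C)))) in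
  let Lbar := fun (a : pauliv n) (C : OpN n) =>
      scop (\prod_(i < n) (#|Gset U ga (a i)|%:R : algC))^-1
        (\sum_(t : {ffun 'I_n -> T} | [forall i, t i \in Gset U ga (a i)]) Lam t C) in
  (forall C : OpN n,
     Stilde C = \sum_(a : pauliv n)
                  scop (3%:R ^+ supp a)^-1 (ketbra (hsigma a) (hsigma a) (Lbar a C)))
  /\
  (forall Lam1 : 'I_n -> T -> Mat2 -> Mat2,
     (forall t, Lam t = tens_super (fun i => Lam1 i (t i))) ->
     forall (a : pauliv n) (C : OpN n),
       Lbar a C = tens_super (fun i => avg_super (Gset U ga (a i)) (Lam1 i)) C).
Proof.
move=> g Stilde Lbar; split.
  move=> C; apply/ffunP => -[p1 p2].
  rewrite /Stilde scopE sum_ffunE sum_ffunE.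
  under eq_bigr do rewrite /g (per_t HT Hga).
  under eq_bigr do rewrite big_mkcond /=.
  rewrite big_distrr /=; under eq_bigr do rewrite big_distrr /=.
  rewrite exchange_big /=; apply: eq_big => // a _.
  rewrite -big_distrr /= -big_mkcond /= /ketbra /Lbar hsZr hs_sum !scopE.
  rewrite -big_distrl /= !mulrA; congr (_ * _); congr (_ * _); congr (_ * _).
  have hN : (3 ^ supp a * \prod_(i < n) #|Gset U ga (a i)|)%N = (#|T| ^ n)%N.
    rewrite /supp -prod_nat_const (big_mkcond (fun i => i \in _)) /= -big_split /=.
    rewrite -[in RHS](card_ord n) -prod_nat_const; apply: eq_bigr => i _.
    rewrite in_set; case: (eqVneq (a i) (false, false)) => [e | nz] /=.
      by rewrite e /Gset eqxx cardsT mul1n.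
    exact: (G_size HT Hga nz).
  rewrite -invfM card_ffun card_ord -hN natrM natrX natr_prod //.
move=> Lam1 HL a C; apply/ffunP => -[p1 p2].
rewrite /Lbar scopE sum_ffunE.
rewrite (eq_bigr (fun t : {ffun 'I_n -> T} => tens_super (fun i => Lam1 i (t i)) C (p1, p2))); last first.
  by move=> t _; rewrite HL.
under eq_bigr do rewrite ffunE.
rewrite ffunE /= exchange_big /= big_distrr /=; apply: eq_big => // q _.
rewrite -big_distrr /= mulrCA; congr (_ * _).
under [RHS]eq_bigr do rewrite /avg_super scopE sum_ffunE.
rewrite big_split /= prodfV bigA_distr_big_dep /=; congr (_ * _).
Qed.
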